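(* Let $S$ be a $d\times d$ sample covariance matrix, $\rho\ge0$, and let $\widehat K^\rho$ be the (unique) minimizer over positive definite $K$ of $-\log\det K+\operatorname{tr}(SK)+\rho\sum_{i\neq j}\max\{0,K_{ij}\}$ (the positive graphical lasso). Let $\widehat G^\rho=(V,\widehat E^\rho)$ be the graph on $V=\{1,\dots,d\}$ with edge $ij$ iff $\widehat K^\rho_{ij}\ne0$, and define the modified sample covariance $S^\rho$ by $S^\rho_{ii}=S_{ii}$ and, for $i\ne j$, $S^\rho_{ij}=S_{ij}$ if $\widehat K^\rho_{ij}\le0$ and $S^\rho_{ij}=S_{ij}+\rho$ if $\widehat K^\rho_{ij}>0$. Then $\widehat K^\rho$ is the maximum likelihood estimator under the Gaussian graphical model determined by $\widehat G^\rho$ based on $S^\rho$, i.e. $\widehat K^\rho$ is the unique positive definite matrix $K$ with $K_{ij}=0$ for $ij\notin\widehat E^\rho$ ($i\ne j$) and $(K^{-1})_{ij}=S^\rho_{ij}$ for $i=j$ and for $ij\in\widehat E^\rho$. *)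

(* Defs.v *)
From HB Require Import structures.
From mathcomp Require Import all_boot all_order all_algebra.
From mathcomp Require Import all_classical all_reals all_analysis.
Set Implicit Arguments. Unset Strict Implicit. Unset Printing Implicit Defensive.
Import Order.TTheory GRing.Theory Num.Theory.
Local Open Scope ring_scope.

Definition posdef (R : realType) (d : nat) (A : 'M[R]_d) : Prop :=
  A^T = A /\ forall x : 'cV[R]_d, x != 0 -> 0 < (x^T *m A *m x) 0 0.

Definition possemidef (R : realType) (d : nat) (A : 'M[R]_d) : Prop :=
  A^T = A /\ forall x : 'cV[R]_d, 0 <= (x^T *m A *m x) 0 0.

Definition pglasso_obj (R : realType) (d : nat) (S : 'M[R]_d) (rho : R)
  (K : 'M[R]_d) : R :=
  - ln (\det K) + \tr (S *m K)
  + rho * \sum_(i < d) \sum_(j < d | i != j) Num.max 0 (K i j).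

Definition is_pglasso_min (R : realType) (d : nat) (S : 'M[R]_d) (rho : R)
  (Kh : 'M[R]_d) : Prop :=
  posdef Kh /\
  forall K : 'M[R]_d, posdef K -> pglasso_obj S rho Kh <= pglasso_obj S rho K.

Definition est_edge (R : realType) (d : nat) (Kh : 'M[R]_d) (i j : 'I_d) : bool :=
  (i != j) && (Kh i j != 0).

Definition S_mod (R : realType) (d : nat) (S : 'M[R]_d) (rho : R)
  (Kh : 'M[R]_d) : 'M[R]_d :=
  \matrix_(i, j) (if (i != j) && (0 < Kh i j) then S i j + rho else S i j).

Definition ggm_mle_cond (R : realType) (d : nat) (G : 'I_d -> 'I_d -> bool)
  (Sp K : 'M[R]_d) : Prop :=
  [/\ posdef K,
      (forall i j : 'I_d, i != j -> ~~ G i j -> K i j = 0) &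
      (forall i j : 'I_d, (i == j) || G i j -> (invmx K) i j = Sp i j)].

Definition is_ggm_mle (R : realType) (d : nat) (G : 'I_d -> 'I_d -> bool)
  (Sp K : 'M[R]_d) : Prop :=
  ggm_mle_cond G Sp K /\ forall K' : 'M[R]_d, ggm_mle_cond G Sp K' -> K' = K.

(* Main.v *)
Require Import Defs.
From HB Require Import structures.
From mathcomp Require Import all_boot all_order all_algebra.
From mathcomp Require Import all_classical all_reals all_analysis.
From mathcomp Require Import ring lra.
Import Order.TTheory GRing.Theory Num.Theory.
Local Open Scope ring_scope.
Section Real.
Variable R : realType.

Lemma small_le (x u v δ : R) : 0 < δ ->
  (forall t, 0 < t < δ -> x <= t * u + t ^+ 2 * v) -> x <= 0.
Proof.
move=> d0 H; rewrite leNgt; apply/negP => x0.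
set B := `|u| + `|v| + 1.
have B0 : 0 < B by rewrite /B; have := normr_ge0 u; have := normr_ge0 v; lra.
set t := Num.min (δ / 2) (Num.min 1 (x / (2 * B))).
have t1 : t <= δ / 2 by rewrite /t ge_min lexx.
have t2 : t <= 1 by rewrite /t !ge_min lexx orbT.
have t3 : t <= x / (2 * B) by rewrite /t !ge_min lexx !orbT.
have t0 : 0 < t by rewrite /t !lt_min; apply/and3P; split; [lra| lra| apply: divr_gt0; lra].
have := H t; rewrite t0 /= => /(_ ltac:(lra)) h.
have hu : t * u <= t * `|u| by rewrite ler_pM2l // ler_norm.
have hv : t ^+ 2 * v <= t * `|v|.
  have e1 : t ^+ 2 * v <= t ^+ 2 * `|v| by rewrite ler_pM2l ?exprn_gt0 // ler_norm.
  have e2 : t ^+ 2 <= t by rewrite expr2; nra.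
  have := normr_ge0 v; nra.
have : t * B <= x / 2.
  have := t3; rewrite ler_pdivlMr; last lra.
  move=> h'; have: t * B * 2 <= x by rewrite -mulrA (mulrC B) mulrA; nra.
  lra.
rewrite /B; nra.
Qed.

Lemma ln_lb (r : R) : 0 < r -> 1 - r^-1 <= ln r.
Proof.
move=> r0; have := expR_ge1Dx (ln r^-1).
rewrite lnK ?posrE ?invr_gt0 // lnV ?posrE //; lra.
Qed.

Lemma calc_eq (A b c δ : R) : 0 < δ ->
  (forall t, `|t| < δ -> 0 < 1 + t * b + t ^+ 2 * c /\
     ln (1 + t * b + t ^+ 2 * c) <= t * A) -> b = A.
Proof.
move=> d0 H.
have key : forall t, `|t| < δ -> t * b + t ^+ 2 * c <= t * A * (1 + t * b + t ^+ 2 * c).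
  move=> t /H [r0 hl]; have := ln_lb _ r0.
  set r := 1 + t * b + t ^+ 2 * c => h1.
  have h2 : 1 - r^-1 <= t * A by apply: le_trans hl.
  have : (1 - r^-1) * r <= t * A * r by rewrite ler_pM2r.
  rewrite mulrBl mulVf ?gt_eqF // mul1r => h3.
  have : r - 1 = t * b + t ^+ 2 * c by rewrite /r; ring.
  lra.
have h1 : b - A <= 0.
  apply: (@small_le (b - A) (A * b - c) (A * c) δ) => // t /andP[t0 td].
  have := key t; rewrite gtr0_norm // => /(_ td) k.
  have : t * (b - A) <= t * (t * (A * b - c) + t ^+ 2 * (A * c)).
    rewrite -subr_ge0.
    have -> : t * (t * (A * b - c) + t ^+ 2 * (A * c)) - t * (b - A) =
      t * A * (1 + t * b + t ^+ 2 * c) - (t * b + t ^+ 2 * c) by ring.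
    by rewrite subr_ge0.
  by rewrite ler_pM2l.
have h2 : A - b <= 0.
  apply: (@small_le (A - b) (A * b - c) (- (A * c)) δ) => // t /andP[t0 td].
  have := key (- t); rewrite normrN gtr0_norm // => /(_ td) k.
  have : t * (A - b) <= t * (t * (A * b - c) + t ^+ 2 * (- (A * c))).
    rewrite -subr_ge0.
    have -> : t * (t * (A * b - c) + t ^+ 2 * (- (A * c))) - t * (A - b) =
      (- t) * A * (1 + (- t) * b + (- t) ^+ 2 * c) - ((- t) * b + (- t) ^+ 2 * c) by ring.
    by rewrite subr_ge0.
  by rewrite ler_pM2l.
lra.
Qed.
End Real.
Section Chol.
Variable R : realType.

Lemma posdef_diag n (P : 'M[R]_n) i : posdef P -> 0 < P i i.
Proof.
case=> _ pP; have := pP (delta_mx i 0).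
have -> : (delta_mx i (0 : 'I_1) : 'cV[R]_n) != 0.
  by apply/negP => /eqP/matrixP/(_ i 0); rewrite !mxE !eqxx /= => /eqP; rewrite oner_eq0.
move=> /(_ isT); rewrite trmx_delta -rowE -colE !mxE.
by [].
Qed.

Lemma chol n (P : 'M[R]_n) : posdef P -> exists L : 'M[R]_n, P = L *m L^T.
Proof.
elim: n P => [|n IH] P pdP.
  by exists 0; apply/matrixP => [[]].
have a0 : 0 < P 0 0 := @posdef_diag _ P 0 pdP.
case: pdP => sP pP.
have pP' : forall y : 'cV[R]_(1 + n), y != 0 -> 0 < (y^T *m (P : 'M[R]_(1 + n)) *m y) 0 0 := pP.
set a := P 0 0.
pose b : 'M[R]_(1, n) := ursubmx (P : 'M[R]_(1 + n)).
pose P2 : 'M[R]_n := drsubmx (P : 'M[R]_(1 + n)).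
have hP : (P : 'M[R]_(1 + n)) = block_mx a%:M b b^T P2.
  rewrite -{1}(@submxK _ 1 n 1 n P); congr block_mx.
    rewrite [LHS]mx11_scalar /a !mxE; congr (_%:M); congr (P _ _); exact: val_inj.
  by rewrite /b (@trmx_ursub _ 1 n 1 n P) sP.
pose Q := P2 - a^-1 *: (b^T *m b).
have pdQ : posdef Q.
  split.
    rewrite /Q linearB linearZ /= trmx_mul trmxK /P2 trmx_drsub.
    by rewrite sP.
  move=> x x0.
  pose β := (b *m x) 0 0.
  pose γ := - a^-1 * β.
  pose y : 'cV[R]_(1 + n) := col_mx (γ%:M) x.
  have y0 : y != 0.
    by apply: contraNneq x0 => y0; rewrite -(col_mxKd γ%:M x) -/y y0 linear0.
  have := pP' y y0; rewrite hP /y tr_col_mx mul_row_block mul_row_col.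
  have hbx : b *m x = β%:M by rewrite [LHS]mx11_scalar.
  have hxb : x^T *m b^T = β%:M by rewrite -trmx_mul hbx tr_scalar_mx.
  rewrite tr_scalar_mx -scalar_mxM hxb -raddfD /=.
  have -> : γ * a + β = 0 by rewrite /γ; field; rewrite gt_eqF.
  rewrite mul_scalar_mx scale0r add0r mulmxDl -mulmxA hbx mul_scalar_mx.
  rewrite /Q mulmxBr mulmxBl -scalemxAr -scalemxAl mulmxA hxb -(mulmxA β%:M) hbx mul_scalar_mx.
  rewrite !mxE !eqxx /= !mulr1n => h; apply: (lt_le_trans h).
  rewrite le_eqVlt; apply/orP; left; apply/eqP; rewrite /γ; field.
  by rewrite gt_eqF.
have [L2 hL2] := IH Q pdQ.
set α := Num.sqrt a.
have α0 : 0 < α by rewrite sqrtr_gt0.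
have αα : α * α = a by rewrite -expr2 sqr_sqrtr // ltW.
pose L : 'M[R]_(1 + n) := block_mx α%:M 0 (α^-1 *: b^T) L2.
exists L.
change ((P : 'M[R]_(1 + n)) = (L : 'M[R]_(1 + n)) *m (L : 'M[R]_(1 + n))^T).
rewrite hP /L tr_block_mx mulmx_block !trmx0 !mulmx0 !addr0.
rewrite !mul0mx addr0 tr_scalar_mx -scalar_mxM αα linearZ /= trmxK.
rewrite mul_scalar_mx mul_mx_scalar -scalemxAl -scalemxAr !scalerA -hL2 /Q.
have aV : α * α^-1 = 1 by rewrite mulfV ?gt_eqF.
have aV' : α^-1 * α^-1 = a^-1 by rewrite -invfM αα.
rewrite !mulfV ?gt_eqF // aV' !scale1r.
by congr block_mx; rewrite addrC subrK.
Qed.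

End Chol.
Section Mat.
Variable R : realType.
Variable n : nat.
Implicit Types A K M : 'M[R]_n.

Definition bf A (x y : 'cV[R]_n) := (x^T *m A *m y) 0 0.

Lemma bf_sym A x y : A^T = A -> bf A x y = bf A y x.
Proof.
move=> sA; rewrite /bf -[in LHS](trmxK (x^T *m A *m y)) mxE.
by rewrite !trmx_mul trmxK sA mulmxA.
Qed.

Lemma bfDl A x y z : bf A (x + y) z = bf A x z + bf A y z.
Proof. by rewrite /bf raddfD /= !mulmxDl !mxE. Qed.
Lemma bfDr A x y z : bf A z (x + y) = bf A z x + bf A z y.
Proof. by rewrite /bf !mulmxDr !mxE. Qed.
Lemma bfZl A s x y : bf A (s *: x) y = s * bf A x y.
Proof. by rewrite /bf linearZ /= -!scalemxAl !mxE. Qed.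
Lemma bfZr A s x y : bf A x (s *: y) = s * bf A x y.
Proof. by rewrite /bf -!scalemxAr !mxE. Qed.
Lemma bfNl A x y : bf A (- x) y = - bf A x y.
Proof. by rewrite -scaleN1r bfZl mulN1r. Qed.
Lemma bfNr A x y : bf A x (- y) = - bf A x y.
Proof. by rewrite -scaleN1r bfZr mulN1r. Qed.

Lemma qf_expand A x u s : A^T = A ->
  bf A (x - s *: u) (x - s *: u) = bf A x x - 2 * s * bf A u x + s ^+ 2 * bf A u u.
Proof.
move=> sA; rewrite !(bfDl, bfDr, bfNl, bfNr, bfZl, bfZr) (bf_sym A x u sA); ring.
Qed.

Lemma posdef_unit K : posdef K -> K \in unitmx.
Proof.
move=> [sK pK]; rewrite unitmxE unitfE; apply/negP => /det0P [v v0 vK].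
have := pK v^T; rewrite trmx_eq0 v0 trmxK vK mul0mx mxE => /(_ isT).
by rewrite ltxx.
Qed.

Lemma posdef_inv K : posdef K -> posdef (invmx K).
Proof.
move=> pdK; have uK := posdef_unit _ pdK; case: pdK => [sK pK]; split.
  by rewrite trmx_inv sK.
move=> x x0; set y := invmx K *m x.
have xE : x = K *m y by rewrite /y mulmxA mulmxV // mul1mx.
have y0 : y != 0 by apply: contraNneq x0 => y0; rewrite xE y0 mulmx0.
clearbody y; have := pK y y0; congr (_ < _); rewrite xE trmx_mul sK.
by rewrite -!mulmxA (mulmxA (invmx K)) mulVmx // mul1mx.
Qed.

Lemma posdef_det K : posdef K -> 0 < \det K.
Proof.
move=> pdK; have := posdef_unit _ pdK; rewrite unitmxE unitfE.
have [L ->] := @chol _ _ _ pdK; rewrite det_mulmx det_tr => h.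
by rewrite lt_def h /= -expr2 sqr_ge0.
Qed.

Lemma trace_qf_eq0 M (X : 'M[R]_n) : posdef M -> \tr (X^T *m M *m X) = 0 -> X = 0.
Proof.
move=> [sM pM] htr.
have e k : (X^T *m M *m X) k k = bf M (col k X) (col k X).
  have -> : (X^T *m M *m X) k k = ((delta_mx (0 : 'I_1) k : 'rV[R]_n) *m (X^T *m M *m X) *m (delta_mx k (0 : 'I_1) : 'cV[R]_n)) 0 0.
    by rewrite -rowE -colE !mxE.
  by rewrite /bf colE trmx_mul trmx_delta !mulmxA.
have ge k : 0 <= bf M (col k X) (col k X).
  have [->|c0] := eqVneq (col k X) 0; first by rewrite /bf mulmx0 mxE.
  exact: ltW (pM _ c0).
have : \sum_k bf M (col k X) (col k X) = \tr (X^T *m M *m X) by apply: eq_bigr => k _; rewrite e.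
rewrite htr; move/psumr_eq0P => /(_ (fun k _ => ge k)) h0.
apply/matrixP => i k; rewrite mxE.
have [c0|c0] := eqVneq (col k X) 0.
  by have := congr1 (fun A : 'cV[R]_n => A i 0) c0; rewrite !mxE.
by have := pM _ c0; rewrite -/(bf M _ _) h0 // ltxx.
Qed.

Lemma trace_pos_eq0 M M' D : posdef M -> posdef M' -> D^T = D ->
  \tr (M *m D *m M' *m D) = 0 -> D = 0.
Proof.
move=> pdM pdM' sD htr.
have [L hL] := @chol _ _ _ pdM'.
have uL : L \in unitmx.
  have := posdef_unit _ pdM'; rewrite hL !unitmxE det_mulmx det_tr !unitfE.
  by rewrite mulf_eq0 orbb.
have : D *m L = 0.
  apply: (@trace_qf_eq0 M (D *m L) pdM); rewrite trmx_mul sD -htr hL.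
  have -> : M *m D *m (L *m L^T) *m D = (M *m D *m L) *m (L^T *m D) by rewrite !mulmxA.
  by rewrite [RHS]mxtrace_mulC !mulmxA.
by move=> h; rewrite -(mulmxK uL D) h mul0mx.
Qed.
End Mat.
Arguments posdef_unit {R n K}.
Arguments posdef_inv {R n K}.
Arguments posdef_det {R n K}.
Arguments posdef_diag {R n P} i.
Arguments chol {R n P}.
Arguments trace_pos_eq0 {R n M M' D}.
Arguments calc_eq {R A b c δ}.
Section Det.
Variable R : realType.
Variable n : nat.
Implicit Types A K : 'M[R]_n.

Lemma liftF (a : 'I_n) k : (lift a k == a) = false.
Proof. by rewrite eq_sym (negbTE (neq_lift a k)). Qed.

Definition rowrep A (a : 'I_n) (u : 'rV[R]_n) : 'M[R]_n :=
  \matrix_(k, l) if k == a then u 0 l else A k l.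
Definition rowadd A (a : 'I_n) (u : 'rV[R]_n) : 'M[R]_n :=
  \matrix_(k, l) (A k l + (k == a)%:R * u 0 l).

Lemma det_rowadd A a u s :
  \det (rowadd A a (s *: u)) = \det A + s * \det (rowrep A a u).
Proof.
rewrite (@determinant_multilinear _ _ _ A (rowrep A a u) a 1 s) ?mul1r //.
- by apply/rowP => l; rewrite !mxE !eqxx /=; ring.
- by apply/matrixP => k l; rewrite !mxE liftF mul0r addr0.
- by apply/matrixP => k l; rewrite !mxE liftF mul0r addr0.
Qed.

Lemma cof_rowrep A a u k : cofactor (rowrep A a u) a k = cofactor A a k.
Proof.
rewrite /cofactor; congr (_ * \det _); apply/matrixP => i j.
by rewrite !mxE liftF.
Qed.

Lemma det_rowrep_delta A a b : \det (rowrep A a (delta_mx 0 b)) = cofactor A a b.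
Proof.
rewrite (expand_det_row _ a) (bigD1 b) //= big1 => [|k kb].
  by rewrite !mxE !eqxx mul1r addr0 cof_rowrep.
by rewrite !mxE eqxx (negbTE kb) mul0r.
Qed.

Lemma cof_inv K a b : K \in unitmx -> cofactor K a b = \det K * invmx K b a.
Proof.
move=> uK; rewrite /invmx uK !mxE mulrA mulfV ?mul1r //.
by move: uK; rewrite unitmxE unitfE.
Qed.

Lemma det_diag_pert K i t : K \in unitmx ->
  \det (K + t *: delta_mx i i) = \det K * (1 + t * invmx K i i + t ^+ 2 * 0).
Proof.
move=> uK.
have -> : K + t *: delta_mx i i = rowadd K i (t *: delta_mx 0 i).
  apply/matrixP => k l; rewrite !mxE /=.
  by case: (k == i); case: (l == i); rewrite /= ?mulr0 ?mulr1 ?mul0r ?mul1r.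
rewrite det_rowadd det_rowrep_delta cof_inv //; ring.
Qed.

Lemma det_off_pert K i j : K \in unitmx -> i != j ->
  exists c, forall t, \det (K + t *: (delta_mx i j + delta_mx j i)) =
    \det K * (1 + t * (invmx K i j + invmx K j i) + t ^+ 2 * c).
Proof.
move=> uK ij.
have dK : \det K != 0 by move: uK; rewrite unitmxE unitfE.
exists (\det (rowrep (rowrep K i (delta_mx 0 j)) j (delta_mx 0 i)) / \det K) => t.
have -> : K + t *: (delta_mx i j + delta_mx j i) =
   rowadd (rowadd K j (t *: delta_mx 0 i)) i (t *: delta_mx 0 j).
  apply/matrixP => k l; rewrite !mxE /=.
  have ji : (j == i) = false by rewrite eq_sym (negbTE ij).
  have [->|ki] := eqVneq k i.
    by rewrite (negbTE ij) /=; ring.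
  have [->|kj] := eqVneq k j.
    by rewrite /=; ring.
  by rewrite /=; ring.
rewrite det_rowadd det_rowadd.
have -> : rowrep (rowadd K j (t *: delta_mx 0 i)) i (delta_mx 0 j) =
  rowadd (rowrep K i (delta_mx 0 j)) j (t *: delta_mx 0 i).
  apply/matrixP => k l; rewrite !mxE.
  have [->|ki] := eqVneq k i; first by rewrite (negbTE ij) mul0r addr0.
  by [].
rewrite det_rowadd !det_rowrep_delta (cof_inv K j i uK) (cof_inv K i j uK).
by field.
Qed.
End Det.
Section U.
Variable R : realType.
Variable n : nat.

Lemma mle_unique (G : 'I_n -> 'I_n -> bool) (Sp K K' : 'M[R]_n) :
  (forall i j, G i j = G j i) -> ggm_mle_cond G Sp K -> ggm_mle_cond G Sp K' -> K' = K.
Proof.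
move=> sG [pdK zK iK] [pdK' zK' iK'].
have uK := posdef_unit pdK; have uK' := posdef_unit pdK'.
set D := K' - K; set M := invmx K; set M' := invmx K'.
have sD : D^T = D.
  have eK : forall i j, K i j = K j i by move=> i j; rewrite -{1}pdK.1 mxE.
  have eK' : forall i j, K' i j = K' j i by move=> i j; rewrite -{1}pdK'.1 mxE.
  by rewrite /D; apply/matrixP => i j; rewrite !mxE eK eK'.
have hM : \tr (M *m D) = \tr (M' *m D).
  apply: eq_bigr => i _; rewrite !mxE; apply: eq_bigr => j _.
  have [h|h] := boolP ((i == j) || G i j).
    by rewrite /M /M' iK // iK'.
  move: h; rewrite negb_or => /andP[hij hG].
  have hji : j != i by rewrite eq_sym.
  have hG' : ~~ G j i by rewrite -sG.
  by rewrite /D !mxE zK // zK' // subrr !mulr0.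
have hMD : M - M' = M *m D *m M'.
  rewrite /D mulmxBr mulmxBl /M /M' -mulmxA mulmxV // mulmx1 mulVmx // mul1mx.
  by [].
have : \tr (M *m D *m M' *m D) = 0.
  by rewrite -hMD mulmxBl raddfB /= hM subrr.
move/(trace_pos_eq0 (posdef_inv pdK) (posdef_inv pdK') sD) => D0.
by apply/eqP; rewrite -subr_eq0 -/D D0.
Qed.
End U.
Arguments bf {R n}.
Arguments rowrep {R n}.
Arguments rowadd {R n}.
Arguments mle_unique {R n G Sp K K'}.
Arguments det_diag_pert {R n K} i t.
Arguments det_off_pert {R n K i j}.
Section Fin.
Variable R : realType.
Variable n : nat.
Implicit Types K H M : 'M[R]_n.

Lemma bf_nonneg K y : posdef K -> 0 <= bf K y y.
Proof.
case=> _ pK; have [->|y0] := eqVneq y 0; first by rewrite /bf mulmx0 mxE.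
exact: ltW (pK _ y0).
Qed.

Lemma bf_delta (i j : 'I_n) (x : 'cV[R]_n) : bf (delta_mx i j) x x = x i 0 * x j 0 :> R.
Proof.
rewrite /bf -(mul_delta_mx (0 : 'I_1)) !mulmxA -colE -mulmxA -rowE.
by rewrite mxE big_ord1 !mxE.
Qed.

Lemma cs_aux (q a m : R) : 0 < m -> 0 <= q - 2 * (a / m) * a + (a / m) ^+ 2 * m -> a ^+ 2 <= m * q.
Proof.
move=> m0; have -> : q - 2 * (a / m) * a + (a / m) ^+ 2 * m = (m * q - a ^+ 2) / m.
  by field; rewrite gt_eqF.
by rewrite pmulr_lge0 ?invr_gt0 // subr_ge0.
Qed.

Lemma cs K (x : 'cV[R]_n) i : posdef K -> (x i 0) ^+ 2 <= invmx K i i * bf K x x.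
Proof.
move=> pdK; have uK := posdef_unit pdK; have pdM := posdef_inv pdK.
have sM := pdM.1; have sK := pdK.1.
have mii := posdef_diag i pdM.
set M := invmx K in sM mii pdM *.
set u : 'cV[R]_n := M *m delta_mx i 0.
have h1 : bf K u x = x i 0.
  rewrite /bf /u trmx_mul sM trmx_delta -(mulmxA _ M K) mulVmx // mulmx1 -rowE.
  by rewrite !mxE.
have h2 : bf K u u = M i i.
  rewrite /bf /u trmx_mul sM trmx_delta -(mulmxA _ M K) mulVmx // mulmx1.
  by rewrite mulmxA -rowE -colE !mxE.
set s := x i 0 / M i i.
have := bf_nonneg K (x - s *: u) pdK; rewrite qf_expand // h1 h2.
exact: cs_aux.
Qed.

Lemma bf_addscale K H t (x : 'cV[R]_n) : bf (K + t *: H) x x = bf K x x + t * bf H x x.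
Proof. by rewrite /bf mulmxDr mulmxDl -scalemxAr -scalemxAl !mxE. Qed.

Lemma pd_pert K H C t : posdef K -> H^T = H -> 0 < C ->
  (forall x, `|bf H x x| <= C * bf K x x) -> `|t| * C < 1 -> posdef (K + t *: H).
Proof.
move=> pdK sH C0 hb ht; split.
  by rewrite linearD linearZ /= sH pdK.1.
move=> x x0; rewrite -/(bf _ x x) bf_addscale.
have q0 : 0 < bf K x x := pdK.2 x x0.
have e1 : - (`|t| * `|bf H x x|) <= t * bf H x x.
  by rewrite -normrM; have := ler_norm (- (t * bf H x x)); rewrite normrN; lra.
have e2 : `|t| * `|bf H x x| <= `|t| * (C * bf K x x) by rewrite ler_wpM2l.
have := normr_ge0 t; nra.
Qed.
End Fin.
Arguments bf_nonneg {R n} K y.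
Arguments cs {R n K} x i.
Arguments pd_pert {R n K H C} t.
Section Pen.
Variable R : realType.
Variable n : nat.
Implicit Types K H M S : 'M[R]_n.

Definition pen K := \sum_(i < n) \sum_(j < n | i != j) Num.max 0 (K i j).

Lemma objE S rho K : pglasso_obj S rho K = - ln (\det K) + \tr (S *m K) + rho * pen K.
Proof. by []. Qed.

Lemma tr_delta S (i j : 'I_n) : \tr (S *m delta_mx i j) = S j i.
Proof.
rewrite -(mul_delta_mx (0 : 'I_1)) mulmxA mxtrace_mulC mulmxA -rowE -colE.
by rewrite trace_mx11 !mxE.
Qed.

Lemma delta_sum (i j : 'I_n) : i != j ->
  \sum_(a < n) \sum_(b < n | a != b) (delta_mx i j : 'M[R]_n) a b = 1.
Proof.
move=> ij; rewrite (bigD1 i) //= [X in _ + X]big1 => [|a ai]; last first.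
  by apply: big1 => b _; rewrite mxE (negbTE ai).
rewrite addr0 (bigD1 j) //= [X in _ + X]big1 => [|b /andP[_ bj]].
  by rewrite mxE !eqxx addr0.
by rewrite mxE eqxx (negbTE bj).
Qed.

Lemma pen_diag K i t : pen (K + t *: delta_mx i i) = pen K.
Proof.
apply: eq_bigr => a _; apply: eq_bigr => b ab; rewrite !mxE.
have [ai|] := eqVneq a i; last by rewrite andFb mulr0 addr0.
have [bi|] := eqVneq b i; last by rewrite andbF mulr0 addr0.
by move: ab; rewrite ai bi eqxx.
Qed.

Lemma pen_off K (i j : 'I_n) t : K^T = K -> i != j -> `|t| < `|K i j| ->
  pen (K + t *: (delta_mx i j + delta_mx j i)) = pen K + t * (2 * (if 0 < K i j then 1 else 0)).
Proof.
move=> sK ij ht.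
have eK : forall a b, K a b = K b a by move=> a b; rewrite -{1}sK mxE.
set s : R := if 0 < K i j then 1 else 0.
have m1 : Num.max 0 (K i j + t) = Num.max 0 (K i j) + t * s.
  rewrite /s; have [kp|kn] := ltP 0 (K i j).
    move: ht; rewrite (gtr0_norm kp) => ht.
    have h1 : 0 <= K i j + t by have := ler_norm (- t); rewrite normrN; lra.
    by rewrite (max_r h1) mulr1.
  have kn' : K i j < 0.
    rewrite lt_neqAle kn andbT; apply/negP => /eqP k0.
    by move: ht; rewrite k0 normr0 ltNge normr_ge0.
  move: ht; rewrite (ltr0_norm kn') => ht.
  have h1 : K i j + t <= 0 by have := ler_norm t; lra.
  by rewrite (max_l h1) ?(max_l kn) mulr0 addr0.
have term : forall a b, a != b ->
    Num.max 0 ((K + t *: (delta_mx i j + delta_mx j i)) a b) =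
    Num.max 0 (K a b) + t * s * (delta_mx i j + delta_mx j i : 'M[R]_n) a b.
  move=> a b ab; rewrite !mxE.
  have [ai|ai] := eqVneq a i; have [bj|bj] := eqVneq b j;
  have [aj|aj] := eqVneq a j; have [bi|bi] := eqVneq b i; rewrite /=.
  all: try by move: ab; rewrite ?ai ?bi ?aj ?bj ?eqxx.
  all: try by move: ij; rewrite -?ai -?bi -?aj -?bj ?eqxx.
  all: rewrite ?addr0 ?add0r ?mulr1 ?mulr0 ?addr0 //.
  all: try by rewrite ai bj m1.
  all: try by rewrite aj bi eK m1.
rewrite /pen.
transitivity (\sum_(a < n) \sum_(b < n | a != b)
   (Num.max 0 (K a b) + t * s * (delta_mx i j + delta_mx j i : 'M[R]_n) a b)).
  by apply: eq_bigr => a _; apply: eq_bigr => b ab; rewrite term.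
under eq_bigr => a _ do rewrite big_split /=.
rewrite big_split /=; congr (_ + _).
under eq_bigr => a _ do rewrite -mulr_sumr.
rewrite -mulr_sumr.
have -> : \sum_(a < n) \sum_(b < n | a != b) (delta_mx i j + delta_mx j i : 'M[R]_n) a b = 2.
  have ji : j != i by rewrite eq_sym.
  transitivity ((\sum_(a < n) \sum_(b < n | a != b) (delta_mx i j : 'M[R]_n) a b) +
                \sum_(a < n) \sum_(b < n | a != b) (delta_mx j i : 'M[R]_n) a b).
    rewrite -big_split; apply: eq_bigr => a _.
    rewrite -big_split; apply: eq_bigr => b _.
    by rewrite [in LHS]mxE.
  rewrite (delta_sum i j ij) (delta_sum j i ji); lra.
ring.
Qed.
End Pen.
Arguments pen {R n}.
Arguments pen_off {R n K i j} t.
Arguments pen_diag {R n} K i t.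
Arguments tr_delta {R n} S i j.
Section Main.
Variable R : realType.
Variable n : nat.

Lemma stat (S K H : 'M[R]_n) rho (b c0 δ : R) :
  is_pglasso_min S rho K -> 0 < δ ->
  (forall t, `|t| < δ -> posdef (K + t *: H)) ->
  (forall t, `|t| < δ -> pen (K + t *: H) = pen K + t * c0) ->
  (exists c, forall t, \det (K + t *: H) = \det K * (1 + t * b + t ^+ 2 * c)) ->
  b = \tr (S *m H) + rho * c0.
Proof.
move=> [pdK hmin] d0 hpd hpen [c hdet].
apply: (@calc_eq R _ b c δ d0) => t ht.
have dK := posdef_det pdK.
have dKt := posdef_det (hpd t ht).
have r0 : 0 < 1 + t * b + t ^+ 2 * c by move: dKt; rewrite hdet pmulr_rgt0.
split => //.
have := hmin _ (hpd t ht); rewrite !objE hdet (hpen t ht) lnM ?posrE //.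
rewrite mulmxDr mxtraceD -scalemxAr mxtraceZ.
have -> : t * (\tr (S *m H) + rho * c0) = t * \tr (S *m H) + rho * (t * c0) by ring.
rewrite mulrDr; lra.
Qed.

Lemma bfD (A B : 'M[R]_n) x : bf (A + B) x x = bf A x x + bf B x x.
Proof. by rewrite /bf mulmxDr mulmxDl mxE. Qed.
End Main.

Theorem corollary7p1 (R : realType) (d : nat) (S : 'M[R]_d) (rho : R)
  (Kh : 'M[R]_d) :
  possemidef S -> 0 <= rho -> is_pglasso_min S rho Kh ->
  is_ggm_mle (est_edge Kh) (S_mod S rho Kh) Kh.
Proof.
move=> [sS _] rho0 hmin.
have pdK := hmin.1; have uK := posdef_unit pdK; have pdM := posdef_inv pdK.
have sK := pdK.1; have sM := pdM.1.
set M := invmx Kh in pdM sM *.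
have eK : forall a b, Kh a b = Kh b a by move=> a b; rewrite -{1}sK mxE.
have eM : forall a b, M a b = M b a by move=> a b; rewrite -{1}sM mxE.
have eS : forall a b, S a b = S b a by move=> a b; rewrite -{1}sS mxE.
have cond : ggm_mle_cond (est_edge Kh) (S_mod S rho Kh) Kh.
  split => //.
    by move=> i j ij; rewrite /est_edge ij /= negbK => /eqP.
  move=> i j /orP [/eqP <- | /andP [ij kij]].
    have mii := posdef_diag i pdM.
    have := @stat R d S Kh (delta_mx i i) rho (M i i) 0 (M i i)^-1 hmin.
    rewrite invr_gt0 mii tr_delta mulr0 addr0 => /(_ isT) h.
    rewrite mxE eqxx /=; apply: h.
    - move=> t ht; apply: (@pd_pert R d Kh (delta_mx i i) (M i i) t pdK) => //.
      + by rewrite trmx_delta.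
      + move=> x; rewrite bf_delta -expr2 ger0_norm ?sqr_ge0 //; exact: cs.
      + by move: ht; rewrite -(ltr_pdivlMr _ _ mii) mul1r.
    - by move=> t _; rewrite pen_diag mulr0 addr0.
    - by exists 0 => t; rewrite det_diag_pert.
  have mii := posdef_diag i pdM; have mjj := posdef_diag j pdM.
  set s : R := if 0 < Kh i j then 1 else 0.
  set C := M i i + M j j.
  have C0 : 0 < C by rewrite /C addr_gt0.
  have kn : 0 < `|Kh i j| by rewrite normr_gt0.
  set δ := Num.min `|Kh i j| C^-1.
  have d0 : 0 < δ by rewrite /δ lt_min kn invr_gt0 C0.
  have dk : δ <= `|Kh i j| by rewrite /δ ge_min lexx.
  have dC : δ <= C^-1 by rewrite /δ ge_min lexx orbT.
  have := @stat R d S Kh (delta_mx i j + delta_mx j i) rho (M i j + M j i) (2 * s) δ hmin d0.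
  rewrite mulmxDr mxtraceD !tr_delta => hst.
  have h : M i j + M j i = S j i + S i j + rho * (2 * s).
    apply: hst.
    - move=> t ht; apply: (@pd_pert R d Kh _ C t pdK) => //.
      + by rewrite linearD /= !trmx_delta addrC.
      + move=> x; rewrite bfD !bf_delta.
        have := cs x i pdK; have := cs x j pdK; rewrite -/M.
        have := sqr_ge0 (x i 0 - x j 0); have := sqr_ge0 (x i 0 + x j 0).
        have := bf_nonneg Kh x pdK.
        rewrite ler_norml /C; move=> q0 h1 h2 h3 h4; apply/andP; split; nra.
      + have : `|t| < C^-1 by apply: lt_le_trans dC.
        by rewrite -(ltr_pdivlMr _ _ C0) mul1r.
    - move=> t ht; apply: pen_off => //; exact: lt_le_trans dk.
    - exact: det_off_pert.
  move: h; rewrite (eM j i) (eS j i) mxE ij /= /s.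
  case: (0 < Kh i j) => h; lra.
split => // K' cK'.
apply: (mle_unique _ cond cK').
by move=> i j; rewrite /est_edge eq_sym eK.
Qed.
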